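(* Suppose $I$ is a stable matching instance with $k$-range preferences and $n$ men and $n$ women, and $\mathcal{R} = \mathcal{R}(I)$ is its rotation poset. Then the pathwidth of $\mathcal{R}$ is at most $50k^2$.
   Context: An SM instance $I$ has men and women with complete strict preference lists; $P_a(b)$ is the rank $a$ assigns $b$. For an agent $a$, $\min\mathrm{rank}(a)$ and $\max\mathrm{rank}(a)$ are the minimum and maximum of $P_b(a)$ over agents $b$ of the opposite sex; $I$ has $k$-range preferences if $\max\mathrm{rank}(a) - \min\mathrm{rank}(a) \leq k-1$ for all $a$. The rotation poset $\mathcal{R}(I)$ is the poset on the rotations of $I$ whose downsets correspond one-to-one with the stable matchings of $I$. A path decomposition of a graph $G=(V,E)$ is a sequence $(X_1,\ldots,X_r)$ of subsets of $V$ covering $V$ such that every edge lies in some $X_i$ and $X_i\cap X_k\subseteq X_j$ for $i\le j\le k$; its width is $\max_i|X_i|-1$, and the pathwidth of $G$ is the minimum width. The pathwidth of a poset is the pathwidth of the undirected version of its Hasse diagram. *)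

(* Defs.v *)
From mathcomp Require Import all_boot perm.
Set Implicit Arguments. Unset Strict Implicit. Unset Printing Implicit Defensive.

(* Preferences are complete and strict: the rank P_m(w) that man m gives
   woman w is [pm m w] (a permutation of 'I_n, i.e. ranks 0..n-1; lower is
   better), and the rank P_w(m) that woman w gives man m is [pw w m].
   (Ranks 0..n-1 instead of 1..n: all rank differences are unchanged.)      *)

Section SM.
Variable n : nat.
Variables (pm : 'I_n -> {perm 'I_n}) (pw : 'I_n -> {perm 'I_n}).

Definition PM (m w : 'I_n) : nat := pm m w.
Definition PW (w m : 'I_n) : nat := pw w m.

(* k-range preferences: for every agent a, maxrank(a) - minrank(a) <= k-1,
   i.e. any two ranks assigned to a differ by less than k. *)
Definition k_range (k : nat) : Prop :=
  (forall w m1 m2 : 'I_n, PM m1 w < PM m2 w + k) /\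
  (forall m w1 w2 : 'I_n, PW w1 m < PW w2 m + k).

Definition husband (M : {perm 'I_n}) (w : 'I_n) : 'I_n := (M^-1)%g w.

Definition stable (M : {perm 'I_n}) : bool :=
  [forall m, forall w, ~~ ((PM m w < PM m (M m)) && (PW w m < PW w (husband M w)))].

Definition wprefers (M : {perm 'I_n}) (w m : 'I_n) : bool :=
  PW w m < PW w (husband M w).

Definition next (M : {perm 'I_n}) (m w : 'I_n) : bool :=
  [&& PM m (M m) < PM m w, wprefers M w m &
      [forall w', ((PM m (M m) < PM m w') && (PM m w' < PM m w)) ==>
                  ~~ wprefers M w' m]].

(* A rotation is identified with its set of pairs {(m_i, w_i)}: it is exposed
   in some stable matching M, i.e. there is a cyclic sequence of distinct men
   m_0,...,m_{r-1} with w_i = M(m_i) and s_M(m_i) = w_{i+1 mod r}. *)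
Definition is_rotation (R : {set 'I_n * 'I_n}) : Prop :=
  exists M : {perm 'I_n}, stable M /\
  exists ms : seq 'I_n,
    [/\ ms != [::], uniq ms,
        R = [set (m, M m) | m in ms] &
        path.cycle (fun a b => next M a (M b)) ms].

Definition eliminated (M : {perm 'I_n}) (R : {set 'I_n * 'I_n}) : bool :=
  [exists p in R, PM p.1 p.2 < PM p.1 (M p.1)].

(* The rotation poset: R1 <= R2 iff every stable matching in which R2 has been
   eliminated also has R1 eliminated (so that downsets of the poset are exactly
   the sets of eliminated rotations of stable matchings). *)
Definition rot_le (R1 R2 : {set 'I_n * 'I_n}) : Prop :=
  forall M : {perm 'I_n}, stable M -> eliminated M R2 -> eliminated M R1.

Definition rot_lt (R1 R2 : {set 'I_n * 'I_n}) : Prop :=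
  rot_le R1 R2 /\ R1 <> R2.

Definition rot_cover (R1 R2 : {set 'I_n * 'I_n}) : Prop :=
  is_rotation R1 /\ is_rotation R2 /\ rot_lt R1 R2 /\
  ~ (exists R3, is_rotation R3 /\ rot_lt R1 R3 /\ rot_lt R3 R2).

Definition hasse_edge (R1 R2 : {set 'I_n * 'I_n}) : Prop :=
  rot_cover R1 R2 \/ rot_cover R2 R1.

End SM.

Section PW.
Variable T : finType.
Variables (V : T -> Prop) (E : T -> T -> Prop).

Definition path_decomposition (X : seq {set T}) : Prop :=
  [/\ (forall B, B \in X -> forall v, v \in B -> V v),
      (forall v, V v -> exists2 B, B \in X & v \in B),
      (forall u v, V u -> V v -> E u v -> exists2 B, B \in X & (u \in B) && (v \in B)) &
      (forall i j l, i <= j -> j <= l -> l < size X ->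
         nth set0 X i :&: nth set0 X l \subset nth set0 X j)].

(* width = max_i |X_i| - 1 *)
Definition pd_width_le (X : seq {set T}) (p : nat) : Prop :=
  forall B, B \in X -> #|B| <= p.+1.

Definition pathwidth_le (p : nat) : Prop :=
  exists X, path_decomposition X /\ pd_width_le X p.
End PW.

(* Main.v *)
Require Import Defs.
From mathcomp Require Import all_boot perm.
From mathcomp Require Import zify.
Set Implicit Arguments. Unset Strict Implicit. Unset Printing Implicit Defensive.

Section Theory.
Variable n : nat.
Variables pm pw : 'I_n -> {perm 'I_n}.
Local Notation PMn := (PM pm).
Local Notation PWn := (PW pw).
Local Notation stab := (stable pm pw).
Local Notation hus := (@husband n).
Local Notation nextM := (Defs.next pm pw).

Lemma PM_inj m : injective (PMn m).
Proof. by move=> w1 w2; rewrite /PM => /val_inj; apply: perm_inj. Qed.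
Lemma PW_inj w : injective (PWn w).
Proof. by move=> w1 w2; rewrite /PW => /val_inj; apply: perm_inj. Qed.

Lemma husK (M : {perm 'I_n}) w : M (hus M w) = w.
Proof. by rewrite /husband permKV. Qed.
Lemma husE (M : {perm 'I_n}) m : hus M (M m) = m.
Proof. by rewrite /husband permK. Qed.

Lemma stableP (M : {perm 'I_n}) : stab M -> forall m w, PMn m w < PMn m (M m) ->
  PWn w (hus M w) <= PWn w m.
Proof.
move=> /forallP H m w h1; move: (H m) => /forallP /(_ w).
by rewrite h1 /= -leqNgt.
Qed.

Lemma stableI (M : {perm 'I_n}) : (forall m w, PMn m w < PMn m (M m) -> PWn w (hus M w) <= PWn w m) -> stab M.
Proof.
move=> H; apply/forallP => m; apply/forallP => w; apply/negP => /andP[h1 h2].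
by move: (H m w h1); rewrite leqNgt h2.
Qed.

Lemma PM_lt_neq m w1 w2 : PMn m w1 < PMn m w2 -> w1 != w2.
Proof. by apply: contraTneq => ->; rewrite ltnn. Qed.

Lemma PM_le_lt m w1 w2 : PMn m w1 <= PMn m w2 -> w1 != w2 -> PMn m w1 < PMn m w2.
Proof. by rewrite leq_eqVlt => /orP[/eqP/PM_inj -> /eqP|]. Qed.
Lemma PW_le_lt w m1 m2 : PWn w m1 <= PWn w m2 -> m1 != m2 -> PWn w m1 < PWn w m2.
Proof. by rewrite leq_eqVlt => /orP[/eqP/PW_inj -> /eqP|]. Qed.

Definition better (M X : {perm 'I_n}) := [set m | PMn m (M m) < PMn m (X m)].

Lemma L0 (M X : {perm 'I_n}) m : stab M -> stab X -> m \in better M X ->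
  PWn (M m) (hus X (M m)) < PWn (M m) m /\ hus X (M m) \in better M X.
Proof.
move=> sM sX; rewrite inE => hm.
set w := M m; set h := hus X w.
have Xh : X h = w by rewrite husK.
have h1 : PWn w h <= PWn w m by apply: (stableP sX).
have hnm : h != m.
  by apply/eqP => E; move: hm; rewrite -/w -Xh E ltnn.
have h2 : PWn w h < PWn w m by apply: PW_le_lt.
split=> //; rewrite inE Xh.
have Mh : M h != w by apply/eqP => E; move: hnm; rewrite -(husE M h) E /w husE eqxx.
apply: PM_le_lt => //; rewrite leqNgt; apply/negP => /(stableP sM).
by rewrite /w husE leqNgt h2.
Qed.

Lemma Limg (M X : {perm 'I_n}) : stab M -> stab X -> M @: better M X = X @: better M X.
Proof.
move=> sM sX; apply/eqP; rewrite eqEcard !card_imset; try exact: perm_inj.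
rewrite leqnn andbT; apply/subsetP => _ /imsetP[m hm ->].
have [_ h2] := L0 sM sX hm.
by apply/imsetP; exists (hus X (M m)) => //; rewrite husK.
Qed.

Lemma L1 (M X : {perm 'I_n}) h : stab M -> stab X -> h \in better M X -> hus M (X h) \in better M X.
Proof.
move=> sM sX hA; have : X h \in X @: better M X by apply: imset_f.
by rewrite -Limg // => /imsetP[h' h'A ->]; rewrite husE.
Qed.


Definition exposed (M : {perm 'I_n}) (ms : seq 'I_n) :=
  [&& ms != [::], uniq ms & cycle (fun a b => nextM M a (M b)) ms].
Definition rotset (M : {perm 'I_n}) (ms : seq 'I_n) : {set 'I_n * 'I_n} :=
  [set (m, M m) | m in ms].

Definition sig (ms : seq 'I_n) : {perm 'I_n} :=
  perm (can_inj (prev_next (undup_uniq ms))).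
Definition elim (M : {perm 'I_n}) ms : {perm 'I_n} := (sig ms * M)%g.

Lemma elimE M ms m : uniq ms -> elim M ms m = M (path.next ms m).
Proof. by move=> U; rewrite /elim permM permE undup_id. Qed.

Lemma next_out (ms : seq 'I_n) m : m \notin ms -> path.next ms m = m.
Proof. by move=> /negbTE h; rewrite next_nth h. Qed.

Lemma elim_out M ms m : uniq ms -> m \notin ms -> elim M ms m = M m.
Proof. by move=> U h; rewrite elimE // next_out. Qed.

Lemma hus_elim M ms w : uniq ms -> hus (elim M ms) w = path.prev ms (hus M w).
Proof.
move=> U; set y := path.prev ms (hus M w).
have : elim M ms y = w by rewrite elimE // next_prev // husK.
by move=> <-; rewrite husE.
Qed.

Lemma exp_next M ms m : exposed M ms -> m \in ms -> nextM M m (M (path.next ms m)).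
Proof. by case/and3P => _ _ C; apply: (next_cycle C). Qed.

Lemma nextP (M : {perm 'I_n}) m w : nextM M m w ->
  [/\ PMn m (M m) < PMn m w, PWn w m < PWn w (hus M w) &
      forall w', PMn m (M m) < PMn m w' -> PMn m w' < PMn m w -> PWn w' (hus M w') <= PWn w' m].
Proof.
case/and3P => h1 h2 /forallP h3; split => // w' a b.
by move: (h3 w'); rewrite a b /= /wprefers -leqNgt.
Qed.

Lemma exp_worse M ms m : exposed M ms -> m \in ms -> PMn m (M m) < PMn m (elim M ms m).
Proof.
move=> E hm; have U : uniq ms by case/and3P: E.
by rewrite elimE //; case/nextP: (exp_next E hm).
Qed.

Lemma exp_women M ms w : exposed M ms -> PWn w (hus (elim M ms) w) <= PWn w (hus M w).
Proof.
move=> E; have U : uniq ms by case/and3P: E.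
rewrite hus_elim //; set h := hus M w.
case hm: (h \in ms); last by rewrite prev_nth hm.
have hp : path.prev ms h \in ms by rewrite mem_prev.
have := exp_next E hp; rewrite next_prev // husK.
by case/nextP => _ /ltnW + _; rewrite /h.
Qed.

Lemma EL M ms : stab M -> exposed M ms -> stab (elim M ms).
Proof.
move=> sM E; have U : uniq ms by case/and3P: E.
apply: stableI => m w hlt.
apply: leq_trans (exp_women w E) _.
case hm: (m \in ms); last first.
  by apply: (stableP sM); move: hlt; rewrite elim_out ?hm.
move: hlt; rewrite elimE // => hlt.
case/nextP: (exp_next E hm) => a1 a2 a3.
case: (ltngtP (PMn m w) (PMn m (M m))) => c.
- exact: (stableP sM).
- exact: a3.
- have -> : w = M m by apply: (PM_inj c).
  by rewrite husE.
Qed.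


Lemma cyc_closed (p : seq 'I_n) (P : pred 'I_n) x : uniq p -> x \in p -> P x ->
  (forall y, y \in p -> P y -> P (path.next p y)) -> forall y, y \in p -> P y.
Proof.
move=> U xp Px H y yp.
have /connectP[q pq ->] := connect_cycle (cycle_next U) xp yp.
elim: q x xp Px pq => //= z q IH x xp Px /andP[/eqP ez pq].
apply: (IH z) => //; first by rewrite -ez mem_next.
by rewrite -ez; apply: H.
Qed.

Lemma Slem (M0 M : {perm 'I_n}) ms : stab M0 -> exposed M0 ms -> stab M ->
  (exists2 m, m \in ms & PMn m (M0 m) < PMn m (M m)) ->
  forall m, m \in ms -> PMn m (M0 m) < PMn m (M m) /\ PMn m (M0 (path.next ms m)) <= PMn m (M m).
Proof.
move=> s0 E sM [x xms Px].
have U : uniq ms by case/and3P: E.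
have C1 : forall m, m \in ms -> PMn m (M0 m) < PMn m (M m) ->
    PMn m (M0 (path.next ms m)) <= PMn m (M m).
  move=> m hm Pm; rewrite leqNgt; apply/negP => c.
  case/nextP: (exp_next E hm) => _ _ a3.
  set v := M m in Pm c.
  have hv := a3 v Pm c.
  set h := hus M0 v in hv.
  have M0h : M0 h = v by rewrite /h husK.
  have hnm : h != m.
    by apply/eqP => E1; move: Pm; rewrite -M0h E1 ltnn.
  have hv' : PWn v h < PWn v m by apply: PW_le_lt.
  have hB : h \in better M M0.
    rewrite inE.
    have Mh : M h != v.
      apply/eqP => E2; move: hnm; rewrite -(husE M h) E2 /v husE eqxx //.
    rewrite M0h; apply: PM_le_lt => //; rewrite leqNgt; apply/negP => /(stableP sM).
    by rewrite /v husE leqNgt hv'.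
  have := L1 sM s0 hB; rewrite husK /v husE inE => c2.
  by move: (ltn_trans c2 Pm); rewrite ltnn.
have C2 : forall m, m \in ms -> PMn m (M0 m) < PMn m (M m) ->
    PMn (path.next ms m) (M0 (path.next ms m)) < PMn (path.next ms m) (M (path.next ms m)).
  move=> m hm Pm; have c1 := C1 m hm Pm.
  set m' := path.next ms m in c1 *.
  case/nextP: (exp_next E hm) => a1 a2 _.
  rewrite -/m' husE in a2.
  have mm' : m' != m by apply/eqP => e; move: a1; rewrite -/m' e ltnn.
  rewrite ltnNge; apply/negP => c.
  case: (ltngtP (PMn m (M0 m')) (PMn m (M m))) c1 => // [c3 _|c3 _].
  - have sp := stableP sM c3; set h := hus M (M0 m') in sp.
    have h1 : PWn (M0 m') h < PWn (M0 m') m' by apply: leq_ltn_trans a2.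
    case: (eqVneq (M m') (M0 m')) => e.
      by move: h1; rewrite /h -e husE ltnn.
    have m'B : m' \in better M M0 by rewrite inE; apply: PM_le_lt.
    have hB := L1 sM s0 m'B; rewrite -/h in hB.
    have [+ _] := L0 sM s0 hB; rewrite /h husK husE => h2.
    by move: (ltn_trans h1 h2); rewrite ltnn.
  - have e : M m = M0 m' by apply: (PM_inj (esym c3)).
    have Mm' : M m' != M0 m'.
      by rewrite -e; apply/eqP => /perm_inj; apply/eqP.
    have m'B : m' \in better M M0 by rewrite inE; apply: PM_le_lt.
    have := L1 sM s0 m'B; rewrite -e husE inE => c2.
    by move: (ltn_trans c2 Pm); rewrite ltnn.
have All : forall m, m \in ms -> PMn m (M0 m) < PMn m (M m).
  move=> m hm.
  apply: (@cyc_closed ms (fun m => PMn m (M0 m) < PMn m (M m)) x U xms Px _ m hm).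
  by move=> y hy Py; apply: C2.
by move=> m hm; split; [apply: All | apply: C1 => //; apply: All].
Qed.


Lemma elimP (M0 M : {perm 'I_n}) ms :
  reflect (exists2 m, m \in ms & PMn m (M0 m) < PMn m (M m)) (eliminated pm M (rotset M0 ms)).
Proof.
apply: (iffP existsP) => [[p /andP[/imsetP[m hm ->] /= h]]|[m hm h]].
  by exists m.
by exists (m, M0 m); rewrite /= h andbT; apply: imset_f.
Qed.

Lemma notelim (M0 M : {perm 'I_n}) ms : ~~ eliminated pm M (rotset M0 ms) ->
  forall m, m \in ms -> PMn m (M m) <= PMn m (M0 m).
Proof.
move=> ne m hm; rewrite leqNgt; apply/negP => h; move/negP: ne; apply.
by apply/elimP; exists m.
Qed.

Lemma rotP R : is_rotation pm pw R <->
  exists M ms, [/\ stab M, exposed M ms & R = rotset M ms].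
Proof.
split=> [[M [sM [ms [h1 h2 h3 h4]]]]|[M [ms [sM /and3P[h1 h2 h4] ->]]]].
  by exists M, ms; split=> //; apply/and3P.
by exists M; split=> //; exists ms; split.
Qed.

Lemma Hlem (X MQ : {perm 'I_n}) ms mq : stab X -> exposed X ms -> stab MQ -> exposed MQ mq ->
  ~~ eliminated pm X (rotset MQ mq) -> eliminated pm (elim X ms) (rotset MQ mq) ->
  forall q, q \in mq -> q \in ms /\ X q = MQ q.
Proof.
move=> sX EX sQ EQ ne /elimP el q hq.
have sE := EL sX EX.
have UX : uniq ms by case/and3P: EX.
have [w1 _] := Slem sQ EQ sE el hq.
have w2 := notelim ne hq.
have qms : q \in ms.
  by apply/negPn/negP => qn; have := leq_ltn_trans w2 w1; rewrite elim_out // ltnn.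
split=> //; apply: (@PM_inj q); apply/eqP; rewrite eqn_leq w2 /= leqNgt; apply/negP => c.
have el2 : exists2 m, m \in ms & PMn m (X m) < PMn m (MQ m) by exists q.
have [_ c2] := Slem sX EX sQ el2 qms.
by move: (leq_ltn_trans c2 w1); rewrite elimE // ltnn.
Qed.

Lemma SC (X MQ : {perm 'I_n}) ms mq : stab X -> exposed X ms -> stab MQ -> exposed MQ mq ->
  ~~ eliminated pm X (rotset MQ mq) -> eliminated pm (elim X ms) (rotset MQ mq) ->
  rotset MQ mq = rotset X ms.
Proof.
move=> sX EX sQ EQ ne el.
have H1 := Hlem sX EX sQ EQ ne el.
have [q0 q0m] : exists q0, q0 \in mq.
  by case/and3P: EQ => + _ _; case: (mq) => // q0 mq1 _; exists q0; rewrite mem_head.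
have [q0s eq0] := H1 q0 q0m.
have ne2 : ~~ eliminated pm MQ (rotset X ms).
  apply/negP => /elimP el2.
  have [c _] := Slem sX EX sQ el2 q0s.
  by move: c; rewrite eq0 ltnn.
have el2 : eliminated pm (elim MQ mq) (rotset X ms).
  by apply/elimP; exists q0 => //; rewrite eq0; apply: exp_worse.
have H2 := Hlem sQ EQ sX EX ne2 el2.
apply/eqP; rewrite eqEsubset; apply/andP; split; apply/subsetP => _ /imsetP[q hq ->].
  by have [a b] := H1 q hq; rewrite -b; apply: imset_f.
by have [a b] := H2 q hq; rewrite -b; apply: imset_f.
Qed.

Lemma Dlem (X MQ : {perm 'I_n}) ms mq m : stab X -> exposed X ms -> stab MQ -> exposed MQ mq ->
  m \in ms -> m \in mq -> X m = MQ m -> rotset MQ mq = rotset X ms.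
Proof.
move=> sX EX sQ EQ hms hmq e.
apply: SC => //.
  apply/negP => /elimP el2.
  have [c _] := Slem sQ EQ sX el2 hmq.
  by move: c; rewrite e ltnn.
by apply/elimP; exists m => //; rewrite -e; apply: exp_worse.
Qed.


Lemma L2 (M X : {perm 'I_n}) h : stab M -> stab X -> h \in better M X -> hus X (M h) \in better M X.
Proof.
move=> sM sX hA; have : M h \in M @: better M X by apply: imset_f.
by rewrite Limg // => /imsetP[h' h'A ->]; rewrite husE.
Qed.

Definition jf (M X : {perm 'I_n}) m := if PMn m (M m) <= PMn m (X m) then M m else X m.
Definition mf (M X : {perm 'I_n}) m := if PMn m (M m) <= PMn m (X m) then X m else M m.

Lemma jf_inj M X : stab M -> stab X -> injective (jf M X).
Proof.
move=> sM sX.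
have mixed : forall m1 m2, PMn m1 (M m1) <= PMn m1 (X m1) ->
    PMn m2 (X m2) < PMn m2 (M m2) -> M m1 != X m2.
  move=> m1 m2 c1 c2; apply/eqP => e.
  have h2 : m2 \in better X M by rewrite inE.
  by have := L2 sX sM h2; rewrite -e husE inE ltnNge c1.
move=> m1 m2; rewrite /jf.
case: ifP => c1; case: ifP => c2 e; try by apply: (perm_inj e).
- by move: (mixed m1 m2 c1); rewrite ltnNge c2 e eqxx => /(_ isT).
- by move: (mixed m2 m1 c2); rewrite ltnNge c1 -e eqxx => /(_ isT).
Qed.

Lemma mf_inj M X : stab M -> stab X -> injective (mf M X).
Proof.
move=> sM sX.
have mixed : forall m1 m2, PMn m1 (M m1) <= PMn m1 (X m1) ->
    PMn m2 (X m2) < PMn m2 (M m2) -> X m1 != M m2.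
  move=> m1 m2 c1 c2; apply/eqP => e.
  have h2 : m2 \in better X M by rewrite inE.
  have := L1 sX sM h2; rewrite -e husE inE ltnNge c1 //.
move=> m1 m2; rewrite /mf.
case: ifP => c1; case: ifP => c2 e; try by apply: (perm_inj e).
- by move: (mixed m1 m2 c1); rewrite ltnNge c2 e eqxx => /(_ isT).
- by move: (mixed m2 m1 c2); rewrite ltnNge c1 e eqxx => /(_ isT).
Qed.

Lemma mfC M X : mf M X =1 mf X M.
Proof.
move=> m; rewrite /mf; case: (ltngtP (PMn m (M m)) (PMn m (X m))) => c //.
by rewrite (PM_inj c).
Qed.

Lemma join_ex M X : stab M -> stab X -> exists J : {perm 'I_n}, stab J /\ J =1 jf M X.
Proof.
move=> sM sX; exists (perm (jf_inj sM sX)).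
have JE : perm (jf_inj sM sX) =1 jf M X by move=> m; rewrite permE.
split=> //; apply: stableI => m w; rewrite JE => hlt.
set J := perm _ in JE *; set h := hus J w.
have Jh : J h = w by rewrite husK.
move: Jh; rewrite JE /jf; case: ifP => c e.
- have <- : hus M w = h by rewrite -e husE.
  apply: (stableP sM); apply: leq_trans hlt _; rewrite /jf; case: ifP => //.
  by move/negbT; rewrite -ltnNge => /ltnW.
- have <- : hus X w = h by rewrite -e husE.
  apply: (stableP sX); apply: leq_trans hlt _; rewrite /jf; case: ifP => //.
Qed.

Lemma meet_half (A B J : {perm 'I_n}) : stab A -> stab B -> J =1 mf A B ->
  forall m w, J m = A m -> PMn m w < PMn m (A m) -> PWn w (hus J w) <= PWn w m.
Proof.
move=> sA sB JE m w Jm hlt.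
have s1 := stableP sA hlt; set hA := hus A w in s1.
set h := hus J w.
have Jh : J h = w by rewrite husK.
move: Jh; rewrite JE /mf; case: ifP => c e; last first.
  by have -> : h = hA by rewrite /hA -e husE.
case: (eqVneq (A h) (B h)) => e2.
  by have -> : h = hA by rewrite /hA -e -e2 husE.
have hB : h \in better A B by rewrite inE; apply: PM_le_lt.
have := L1 sA sB hB; rewrite e -/hA => hAB.
have [+ _] := L0 sA sB hAB; rewrite /hA husK -e husE => lt.
by rewrite e in lt *; exact: (ltnW (leq_trans lt s1)).
Qed.

Lemma meet_ex M X : stab M -> stab X -> exists J : {perm 'I_n}, stab J /\ J =1 mf M X.
Proof.
move=> sM sX; exists (perm (mf_inj sM sX)).
have JE : perm (mf_inj sM sX) =1 mf M X by move=> m; rewrite permE.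
split=> //; apply: stableI => m w.
set J := perm _ in JE *.
have JE' : J =1 mf X M by move=> x; rewrite JE mfC.
have := JE m; rewrite /mf; case: ifP => c e hlt.
- by apply: (meet_half sX sM JE' e); rewrite -e.
- by apply: (meet_half sM sX JE e); rewrite -e.
Qed.


Lemma iterP (f : 'I_n -> 'I_n) (P : pred 'I_n) x j : P x -> (forall y, P y -> P (f y)) -> P (iter j f x).
Proof. by move=> Px H; elim: j => //= j IH; apply: H. Qed.

Lemma cyc_ex (f : 'I_n -> 'I_n) (P : pred 'I_n) x : P x -> (forall y, P y -> P (f y)) ->
  exists p, [/\ p != [::], uniq p, fcycle f p & all P p].
Proof.
move=> Px HP.
have lp : looping f x #|'I_n|.
  apply/negPn; rewrite -looping_uniq; apply/negP => /card_uniqP.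
  rewrite size_traject => e.
  by have := max_card (mem (traject f x #|'I_n|.+1)); rewrite e ltnn.
have [i ilt ei] := trajectP lp.
set z := iter i f x.
have per : exists L, (0 < L) && (iter L f z == z).
  exists (#|'I_n| - i); rewrite subn_gt0 ilt /= /z -iterD subnK ?ei //.
  exact: ltnW.
case: (ex_minnP per) => L /andP[L0 /eqP zL] Lmin.
have Pz : P z by apply: iterP.
exists (traject f z L); split.
- by case: L L0 {zL Lmin}.
- case: L L0 zL Lmin => // L' _ zL Lmin.
  rewrite looping_uniq; apply/negP => /trajectP[j jlt ej].
  have : (0 < j.+1) && (iter j.+1 f z == z).
    by rewrite /= -ej -iterS zL.
  by move/Lmin; rewrite ltnS leqNgt jlt.
- case: L L0 zL {Lmin} => // L' _ zL.
  rewrite /= rcons_path fpath_traject last_traject /= -iterS zL eqxx //.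
- by apply/allP => y /trajectP[j _ ->]; apply: iterP.
Qed.


Lemma Eex (M X : {perm 'I_n}) : stab M -> stab X ->
  (forall m, PMn m (M m) <= PMn m (X m)) -> (exists m0, M m0 != X m0) ->
  exists ms, exposed M ms /\ forall m, m \in ms -> PMn m (M m) < PMn m (X m).
Proof.
move=> sM sX le [m0 hm0].
pose C m w := (PMn m (M m) < PMn m w) && (PWn w m < PWn w (hus M w)).
have CX : forall m, M m != X m -> C m (X m).
  move=> m hm; apply/andP; split; first by apply: PM_le_lt.
  set h := hus M (X m).
  have Mh : M h = X m by rewrite husK.
  have hnm : h != m by apply/eqP => e; move: hm; rewrite -Mh e eqxx.
  have Xh : X h != X m by apply/eqP => /perm_inj /eqP; rewrite (negbTE hnm).
  have c : PMn h (X m) < PMn h (X h) by rewrite -Mh; apply: PM_le_lt; rewrite ?le // Mh eq_sym.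
  have := stableP sX c; rewrite husE => c2.
  apply: PW_le_lt => //; by rewrite eq_sym.
pose s m := [arg min_(w < X m | C m w) PMn m w].
pose f m := if M m != X m then hus M (s m) else m.
have sP : forall m, M m != X m -> C m (s m) /\ forall w, C m w -> PMn m (s m) <= PMn m w.
  move=> m hm; rewrite /s; case: arg_minnP; first exact: CX.
  by move=> w Cw H; split.
have nextS : forall m, M m != X m -> nextM M m (s m).
  move=> m hm; have [/andP[c1 c2] H] := sP m hm.
  apply/and3P; split => //; apply/forallP => w'; apply/implyP => /andP[a b].
  apply/negP => c; have := H w'; rewrite /C a /= => /(_ c).
  by rewrite leqNgt b.
have fB : forall m, M m != X m -> M (f m) != X (f m).
  move=> m hm; rewrite /f hm husK.
  have [/andP[c1 c2] H] := sP m hm.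
  set w := s m in c1 c2 H *; set h := hus M w in c2 *.
  apply/eqP => e.
  case: (eqVneq w (X m)) => ew.
    have Mh : M h = w by rewrite /h husK.
    have : X h = X m by rewrite -e ew.
    by move/perm_inj => hm'; move: hm; rewrite -hm' Mh ew hm' eqxx.
  have c3 : PMn m w < PMn m (X m) by apply: PM_le_lt; [apply: H; apply: CX|].
  have hX : hus X w = h by rewrite e husE.
  have := stableP sX c3; rewrite hX => c4.
  by move: (leq_ltn_trans c4 c2); rewrite ltnn.
have [p [p0 Up Cp Ap]] := @cyc_ex f (fun m => M m != X m) m0 hm0 fB.
exists p; split.
  apply/and3P; split => //; apply: cycle_from_next => // x xp.
  have hx : M x != X x by move/allP: Ap => /(_ x xp).
  by rewrite (nextE Cp xp) /f hx husK; apply: nextS.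
move=> m hm; have hx : M m != X m by move/allP: Ap => /(_ m hm).
exact: PM_le_lt.
Qed.


Lemma sum_eq (F G : 'I_n -> nat) : (forall i, F i <= G i) ->
  \sum_i G i <= \sum_i F i -> forall i, F i = G i.
Proof.
move=> le ge i.
have L := @leqif_sum _ predT (fun i => F i == G i) F G (fun i _ => leqif_eq (le i)).
have lS : \sum_i F i <= \sum_i G i by apply: leq_sum => j _; apply: le.
have e : \sum_i F i == \sum_i G i by rewrite eqn_leq ge lS.
by move: e; rewrite L => /forallP /(_ i) /eqP.
Qed.

Lemma elim_mono (A B : {perm 'I_n}) (R : {set 'I_n * 'I_n}) : (forall m, PMn m (A m) <= PMn m (B m)) ->
  eliminated pm A R -> eliminated pm B R.
Proof.
move=> le /existsP[p /andP[pR h]]; apply/existsP; exists p; rewrite pR /=.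
exact: leq_trans h (le _).
Qed.

Lemma notelimP (Z : {perm 'I_n}) (R : {set 'I_n * 'I_n}) :
  reflect (forall p, p \in R -> PMn p.1 (Z p.1) <= PMn p.1 p.2) (~~ eliminated pm Z R).
Proof.
apply: (iffP negP) => [ne p pR|H /existsP[p /andP[pR h]]].
  by rewrite leqNgt; apply/negP => h; apply: ne; apply/existsP; exists p; rewrite pR.
by move: (H p pR); rewrite leqNgt h.
Qed.

Lemma exp_nonempty (M : {perm 'I_n}) ms : exposed M ms -> exists m, m \in ms.
Proof. by case/and3P; case: ms => // m ms _ _ _; exists m; rewrite mem_head. Qed.

Lemma elim_rot (M0 M : {perm 'I_n}) ms : stab M0 -> exposed M0 ms -> stab M ->
  eliminated pm M (rotset M0 ms) -> forall m, m \in ms -> PMn m (M0 m) < PMn m (M m).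
Proof.
move=> s0 E sM /elimP el m hm; by have [] := Slem s0 E sM el hm.
Qed.

Lemma V2_ex (M2 : {perm 'I_n}) ms2 : stab M2 -> exposed M2 ms2 ->
  exists V2 : {perm 'I_n}, [/\ stab V2, eliminated pm V2 (rotset M2 ms2) &
    forall X, stab X -> eliminated pm X (rotset M2 ms2) -> forall m, PMn m (V2 m) <= PMn m (X m)].
Proof.
move=> s2 E2; set R2 := rotset M2 ms2.
pose S2 (X : {perm 'I_n}) := stab X && eliminated pm X R2.
have S2E : S2 (elim M2 ms2).
  rewrite /S2 EL //=; have [m hm] := exp_nonempty E2.
  by apply/elimP; exists m => //; apply: exp_worse.
pose V := [arg min_(X < elim M2 ms2 | S2 X) \sum_m PMn m (X m)].
have [V2 /andP[sV eV] Vmin] : extremum_spec leq S2 (fun X => \sum_m PMn m (X m)) V.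
  exact: arg_minnP.
exists V2; split => // X sX eX.
have [J [sJ JE]] := join_ex sV sX.
have SJ : S2 J.
  rewrite /S2 sJ /=; have [m0 hm0] := exp_nonempty E2.
  apply/elimP; exists m0 => //; rewrite JE /jf; case: ifP => _.
    exact: (elim_rot s2 E2 sV eV).
  exact: (elim_rot s2 E2 sX eX).
have le1 : forall m, PMn m (J m) <= PMn m (V2 m).
  by move=> m; rewrite JE /jf; case: ifP => // /negbT; rewrite -ltnNge => /ltnW.
have := sum_eq le1 (Vmin J SJ) => eq1 m.
rewrite -eq1 JE /jf; case: ifP => //; by rewrite leqnn.
Qed.


Lemma jf_le1 (M X : {perm 'I_n}) m : PMn m (jf M X m) <= PMn m (M m).
Proof. by rewrite /jf; case: ifP => // /negbT; rewrite -ltnNge => /ltnW. Qed.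
Lemma jf_le2 (M X : {perm 'I_n}) m : PMn m (jf M X m) <= PMn m (X m).
Proof. by rewrite /jf; case: ifP. Qed.
Lemma mf_ge1 (M X : {perm 'I_n}) m : PMn m (M m) <= PMn m (mf M X m).
Proof. by rewrite /mf; case: ifP. Qed.
Lemma mf_ge2 (M X : {perm 'I_n}) m : PMn m (X m) <= PMn m (mf M X m).
Proof. by rewrite /mf; case: ifP => // /negbT; rewrite -ltnNge => /ltnW. Qed.
Lemma mf_or (M X : {perm 'I_n}) m : mf M X m = M m \/ mf M X m = X m.
Proof. by rewrite /mf; case: ifP; [right|left]. Qed.
Lemma jf_or (M X : {perm 'I_n}) m : jf M X m = M m \/ jf M X m = X m.
Proof. by rewrite /jf; case: ifP; [left|right]. Qed.

Lemma Zstar_ex (M1 : {perm 'I_n}) ms1 V2 : stab M1 -> exposed M1 ms1 -> stab V2 ->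
  exists Z : {perm 'I_n}, [/\ stab Z, (forall m, PMn m (Z m) <= PMn m (V2 m)),
    ~~ eliminated pm Z (rotset M1 ms1) &
    forall Z', stab Z' -> (forall m, PMn m (Z' m) <= PMn m (V2 m)) ->
      ~~ eliminated pm Z' (rotset M1 ms1) -> forall m, PMn m (Z' m) <= PMn m (Z m)].
Proof.
move=> s1 E1 sV; set R1 := rotset M1 ms1.
pose T (Z : {perm 'I_n}) := [&& stab Z, [forall m, PMn m (Z m) <= PMn m (V2 m)] & ~~ eliminated pm Z R1].
have [Z0 [sZ0 Z0E]] := join_ex s1 sV.
have TZ0 : T Z0.
  rewrite /T sZ0 /=; apply/andP; split.
    by apply/forallP => m; rewrite Z0E jf_le2.
  by apply/notelimP => _ /imsetP[m hm ->] /=; rewrite Z0E jf_le1.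
pose Zs := [arg max_(Z > Z0 | T Z) \sum_m PMn m (Z m)].
have [Z /and3P[sZ /forallP leZ neZ] Zmax] : extremum_spec geq T (fun X => \sum_m PMn m (X m)) Zs.
  exact: arg_maxnP.
exists Z; split => // Z' sZ' leZ' neZ'.
have [J [sJ JE]] := meet_ex sZ sZ'.
have TJ : T J.
  rewrite /T sJ /=; apply/andP; split.
    apply/forallP => m; rewrite JE; case: (mf_or Z Z' m) => ->; [exact: leZ | exact: leZ'].
  apply/notelimP => p pR; rewrite JE; case: (mf_or Z Z' p.1) => ->.
    by move/notelimP: neZ => /(_ p pR).
  by move/notelimP: neZ' => /(_ p pR).
have ge1 : forall m, PMn m (Z m) <= PMn m (J m) by move=> m; rewrite JE mf_ge1.
have := sum_eq ge1 (Zmax J TJ) => eq1 m.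
by rewrite eq1 JE mf_ge2.
Qed.


Definition inW (R : {set 'I_n * 'I_n}) w := [exists p in R, p.2 == w].

Lemma inW_rot (M : {perm 'I_n}) ms m : m \in ms -> inW (rotset M ms) (M m).
Proof. by move=> hm; apply/existsP; exists (m, M m); rewrite /= eqxx andbT; apply: imset_f. Qed.

Lemma neq_ex (A B : {perm 'I_n}) (R : {set 'I_n * 'I_n}) :
  eliminated pm A R -> ~~ eliminated pm B R -> exists m0, B m0 != A m0.
Proof.
move=> eA neB; case: (boolP [exists m0, B m0 != A m0]) => [/existsP //|/existsPn H].
have e : forall m, PMn m (A m) <= PMn m (B m).
  by move=> m; move: (H m); rewrite negbK => /eqP ->.
by move: neB; rewrite (elim_mono e eA).
Qed.

Lemma Y_ge (Z : {perm 'I_n}) ms : exposed Z ms -> forall m, PMn m (Z m) <= PMn m (elim Z ms m).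
Proof.
move=> E m; have U : uniq ms by case/and3P: E.
case hm: (m \in ms); first by apply: ltnW; apply: exp_worse.
by rewrite elim_out ?hm.
Qed.

Lemma cover_loc R1 R2 : rot_cover pm pw R1 R2 ->
  exists m x y z, [/\ PMn m x <= PMn m y, PMn m y <= PMn m z &
    (inW R1 x /\ inW R1 z /\ inW R2 y) \/ (inW R2 x /\ inW R2 z /\ inW R1 y)].
Proof.
case=> rR1 [rR2 [[le12 ne12] nomid]].
case: ((rotP R1).1 rR1) => M1 [ms1 [s1 E1 eR1]]; subst R1.
case: ((rotP R2).1 rR2) => M2 [ms2 [s2 E2 eR2]]; subst R2.
set R1 := rotset M1 ms1 in le12 ne12 nomid *.
set R2 := rotset M2 ms2 in le12 ne12 nomid *.
have [V2 [sV eV2 Vge]] := V2_ex s2 E2.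
have V2P : forall rho, eliminated pm V2 rho -> rot_le pm pw rho R2.
  by move=> rho e X sX eX; apply: elim_mono (Vge X sX eX) e.
have eV1 : eliminated pm V2 R1 := le12 V2 sV eV2.
have [Z [sZ leZ neZ Zmax]] := Zstar_ex s1 E1 sV.
have step3 : forall ms, exposed Z ms -> (forall m, m \in ms -> PMn m (Z m) < PMn m (V2 m)) ->
    rotset Z ms = R1 /\ forall m, PMn m (elim Z ms m) <= PMn m (V2 m).
  move=> ms E st; have U : uniq ms by case/and3P: E.
  have rel : eliminated pm V2 (rotset Z ms).
    by have [m hm] := exp_nonempty E; apply/elimP; exists m => //; apply: st.
  have leY : forall m, PMn m (elim Z ms m) <= PMn m (V2 m).
    move=> m; case hm: (m \in ms); last by rewrite elim_out ?hm.
    by rewrite elimE //; have [_ ] := Slem sZ E sV (elimP _ _ _ rel) hm.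
  split => //.
  have sY := EL sZ E.
  case: (boolP (eliminated pm (elim Z ms) R1)) => el.
    by rewrite /R1 (SC sZ E s1 E1 neZ el).
  have [m hm] := exp_nonempty E.
  have := Zmax _ sY leY el m; rewrite leqNgt (exp_worse E hm) //.
have [m0 hm0] := neq_ex eV1 neZ.
have [ms [EZ strict]] := Eex sZ sV leZ (ex_intro _ m0 hm0).
have [eR1 leY] := step3 ms EZ strict.
rewrite -eR1 in le12 ne12 nomid *.
have UZ : uniq ms by case/and3P: EZ.
set Y := elim Z ms in leY *.
have sY : stab Y := EL sZ EZ.
have elY1 : eliminated pm Y (rotset Z ms).
  by have [m hm] := exp_nonempty EZ; apply/elimP; exists m => //; apply: exp_worse.
have neZ2 : ~~ eliminated pm Z R2.
  by apply/negP => /(le12 Z sZ); rewrite eR1; apply/negP.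
case: (boolP (eliminated pm Y R2)) => eY2.
  case/existsP: eY2 => p /andP[pR2 hp].
  have h2 := (elimT (notelimP _ _) neZ2) p pR2.
  set m := p.1 in hp h2.
  have hm : m \in ms.
    apply/negPn/negP => hn; move: (leq_ltn_trans h2 hp).
    by rewrite /Y elim_out // ltnn.
  exists m, (Z m), p.2, (Y m); split => //; first exact: ltnW.
  left; split; first exact: inW_rot.
  split; first by rewrite /Y elimE //; apply: inW_rot; rewrite mem_next.
  by apply/existsP; exists p; rewrite pR2 eqxx.
have [m1 hm1] := neq_ex eV2 eY2.
have [ms' [EY strict']] := Eex sY sV leY (ex_intro _ m1 hm1).
have UY : uniq ms' by case/and3P: EY.
set rho := rotset Y ms'.
have rrho : is_rotation pm pw rho by apply/rotP; exists Y, ms'.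
have elV : eliminated pm V2 rho.
  by have [m hm] := exp_nonempty EY; apply/elimP; exists m => //; apply: strict'.
have le2 := V2P _ elV.
have neYr : ~~ eliminated pm Y rho.
  by apply/negP => /elimP[m _]; rewrite ltnn.
have le1 : rot_le pm pw (rotset Z ms) rho.
  move=> X sX eX; case: (boolP (eliminated pm X (rotset Z ms))) => // neX; exfalso.
  have [X' [sX' X'E]] := join_ex sX sV.
  have leX' : forall m, PMn m (X' m) <= PMn m (V2 m) by move=> m; rewrite X'E jf_le2.
  have neX' : ~~ eliminated pm X' (rotset Z ms).
    apply/notelimP => p pR; rewrite X'E; apply: leq_trans (jf_le1 _ _ _) _.
    by move/notelimP: neX => /(_ p pR).
  have neX'' : ~~ eliminated pm X' (rotset M1 ms1) by rewrite -/R1 -eR1.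
  have le3 := Zmax _ sX' leX' neX''.
  have eX' : eliminated pm X' rho.
    have [m hm] := exp_nonempty EY; apply/elimP; exists m => //.
    rewrite X'E; case: (jf_or X V2 m) => ->.
      exact: (elim_rot sY EY sX eX).
    exact: (elim_rot sY EY sV elV).
  have eZ := elim_mono le3 eX'.
  by move: neYr; rewrite (elim_mono (Y_ge EZ) eZ).
have nr1 : rho != rotset Z ms.
  by apply/eqP => e; move: neYr; rewrite e elY1.
case: (eqVneq rho R2) => [erho|nr2]; last first.
  by exfalso; apply: nomid; exists rho; split => //; split; split => //; apply/eqP; rewrite // eq_sym.
rewrite -erho in ne12 *.
case: (boolP [exists m, (m \in ms) && (m \in ms')]) => [/existsP[m /andP[hm hm']] | /existsPn nsh].
  exists m, (Y m), (Y m), (Y m); split => //; left.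
  have h1 : inW (rotset Z ms) (Y m) by rewrite /Y elimE //; apply: inW_rot; rewrite mem_next.
  by split => //; split => //; apply: inW_rot.
have out : forall m, m \in ms' -> m \notin ms.
  by move=> m hm; move: (nsh m); rewrite hm andbT.
have ZY : forall m, m \in ms' -> Z m = Y m by move=> m hm; rewrite /Y elim_out // out.
have notcyc : ~~ cycle (fun a b => nextM Z a (Z b)) ms'.
  apply/negP => C.
  have EZ' : exposed Z ms' by case/and3P: EY => a b _; apply/and3P.
  have st : forall m, m \in ms' -> PMn m (Z m) < PMn m (V2 m).
    by move=> m hm; rewrite ZY //; apply: strict'.
  have [e _] := step3 ms' EZ' st.
  have e2 : rotset Z ms' = rho by apply: eq_in_imset => m hm; rewrite ZY.
  by apply: ne12; rewrite -e2 e eR1.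
have [m hm nm] : exists2 m, m \in ms' & ~~ nextM Z m (Z (path.next ms' m)).
  case: (boolP [forall m, (m \in ms') ==> nextM Z m (Z (path.next ms' m))]) => [/forallP H | /forallPn [m]].
    exfalso; move/negP: notcyc; apply; apply: cycle_from_next => // x hx.
    exact: (implyP (H x) hx).
  by rewrite negb_imply => /andP[a b]; exists m.
set m' := path.next ms' m in nm.
have hm' : m' \in ms' by rewrite mem_next.
case/nextP: (exp_next EY hm) => a1 a2 a3.
rewrite -/m' in a1 a2 a3.
have Zm : Z m = Y m := ZY m hm.
have Zm' : Z m' = Y m' := ZY m' hm'.
set w'' := Y m' in a1 a2 a3 Zm'.
have hY : forall w, hus Z w \notin ms -> hus Y w = hus Z w.
  by move=> w hw; rewrite /Y hus_elim // prev_nth (negbTE hw).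
case: (boolP (hus Z w'' \in ms)) => hh.
  exists m, w'', w'', w''; split => //; left.
  have h1 : inW (rotset Z ms) w'' by have := inW_rot Z hh; rewrite husK.
  by split => //; split => //; apply: inW_rot.
case: (boolP [exists w', [&& PMn m (Y m) < PMn m w', PMn m w' < PMn m w'' & PWn w' m < PWn w' (hus Z w')]]).
  case/existsP => w' /and3P[b1 b2 pr].
  case: (boolP (hus Z w' \in ms)) => hw'; last first.
    by move: (a3 w' b1 b2); rewrite (hY w' hw') leqNgt pr.
  exists m, (Y m), w', w''; split; try exact: ltnW.
  right; split; first exact: inW_rot.
  split; first exact: inW_rot.
  by have := inW_rot Z hw'; rewrite husK.
move/existsPn => H; exfalso; move/negP: nm; apply.
rewrite Zm'; apply/and3P; split.
- by rewrite Zm.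
- by rewrite /wprefers -(hY _ hh).
apply/forallP => w'; apply/implyP; rewrite Zm => /andP[b1 b2]; apply/negP => pr.
by move: (H w'); rewrite b1 b2 /=; move: pr; rewrite /wprefers => ->.
Qed.

End Theory.

Section Count.
Variable n : nat.

Lemma cnt_win (P : {perm 'I_n}) lo len :
  #|[set x | (lo <= P x) && (P x < lo + len)]| <= len.
Proof.
case: len => [|len].
  rewrite leqn0 cards_eq0; apply/eqP/setP => x; rewrite !inE addn0.
  by case: leqP.
set S := [set x | _].
pose f (x : 'I_n) : 'I_len.+1 := Ordinal (ltn_pmod (P x - lo) (ltn0Sn len)).
have inj : {in S &, injective f}.
  move=> x y; rewrite !inE => /andP[a1 a2] /andP[b1 b2] /(congr1 val) /=.
  rewrite !modn_small; try lia.
  move=> e; apply: (@perm_inj _ P); apply: ord_inj; lia.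
by rewrite -(card_in_imset inj) -[X in _ <= X]card_ord max_card.
Qed.

Lemma cnt_lt (P : {perm 'I_n}) r : r <= n -> r <= #|[set x | P x < r]|.
Proof.
move=> rn.
pose g (j : 'I_r) : 'I_n := (P^-1)%g (widen_ord rn j).
have inj : injective g.
  by move=> a b /perm_inj /(congr1 val) /= /val_inj.
rewrite -[X in X <= _]card_ord -(card_imset _ inj).
apply: subset_leq_card; apply/subsetP => _ /imsetP[j _ ->].
by rewrite inE /g permKV /=.
Qed.

End Count.

Section KR.
Variable n : nat.
Variables pm pw : 'I_n -> {perm 'I_n}.
Variable k : nat.
Hypothesis hk : k_range pm pw k.
Variables m0 w0 : 'I_n.
Local Notation PMn := (PM pm).
Local Notation PWn := (PW pw).
Local Notation stab := (stable pm pw).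
Local Notation hus := (@husband n).
Local Notation A w := (PM pm m0 w).
Local Notation B m := (PW pw w0 m).

Lemma kA1 m w : PMn m w < A w + k. Proof. by case: hk => h _; apply: h. Qed.
Lemma kA2 m w : A w < PMn m w + k. Proof. by case: hk => h _; apply: h. Qed.
Lemma kB1 w m : PWn w m < B m + k. Proof. by case: hk => _ h; apply: h. Qed.
Lemma kB2 w m : B m < PWn w m + k. Proof. by case: hk => _ h; apply: h. Qed.

Lemma SP_B (M : {perm 'I_n}) m : stab M -> B m + 3 <= A (M m) + 3 * k.
Proof.
move=> sM; set w := M m; set r := PWn w m.
set S := [set m' | pw w m' < r].
have cS : r <= #|S| by apply: cnt_lt; apply: ltnW; rewrite /r /PW ltn_ord.
have hS : forall m', m' \in S -> M m' != w /\ A (M m') + 3 <= A w + 2 * k.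
  move=> m'; rewrite inE => hm'.
  have nm : m' != m by apply: contraTneq hm' => ->; rewrite ltnn.
  have Mm : M m' != w by rewrite /w; apply/eqP => /perm_inj /eqP; rewrite (negbTE nm).
  split => //.
  have c : PMn m' (M m') < PMn m' w.
    apply: PM_le_lt => //; rewrite leqNgt; apply/negP => /(stableP sM).
    by rewrite /w husE leqNgt; rewrite /PW in hm' *; rewrite hm'.
  have := kA1 m' w; have := kA2 m' (M m'); lia.
set T := w |: (M @: S).
have cT : #|T| = (#|S|).+1.
  rewrite cardsU1 card_imset; last exact: perm_inj.
  suff -> : w \notin M @: S by [].
  by apply/imsetP => [[m' hm' e]]; have [/eqP] := hS m' hm'; rewrite e.
have sub : T \subset [set x | (0 <= pm m0 x) && (pm m0 x < 0 + (A w + 2 * k - 1))].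
  apply/subsetP => x; rewrite !inE /= => /orP[/eqP ->|/imsetP[m' hm' ->]].
    have := kA1 m w; have := kA2 m w; rewrite /PM; lia.
  have [_ h] := hS m' hm'; move: h; rewrite /PM; lia.
have := leq_trans (subset_leq_card sub) (cnt_win _ _ _); rewrite cT => c2.
have := kB2 w m; rewrite -/r; lia.
Qed.

Lemma SP_A (M : {perm 'I_n}) m : stab M -> A (M m) + 3 <= B m + 3 * k.
Proof.
move=> sM; set w := M m; set q := PMn m w.
set S := [set w' | pm m w' < q].
have cS : q <= #|S| by apply: cnt_lt; apply: ltnW; rewrite /q /PM ltn_ord.
have hS : forall w', w' \in S -> hus M w' != m /\ B (hus M w') + 3 <= B m + 2 * k.
  move=> w'; rewrite inE => hw'.
  have nw : w' != w by apply: contraTneq hw' => ->; rewrite ltnn.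
  have hm : hus M w' != m by apply/eqP => e; move: nw; rewrite /w -e husK eqxx.
  split => //.
  have c : PWn w' (hus M w') < PWn w' m.
    by apply: PW_le_lt => //; apply: (stableP sM).
  have := kB2 w' (hus M w'); have := kB1 w' m; lia.
set T := m |: ((M^-1)%g @: S).
have cT : #|T| = (#|S|).+1.
  rewrite cardsU1 card_imset; last exact: perm_inj.
  suff -> : m \notin (M^-1)%g @: S by [].
  by apply/imsetP => [[w' hw' e]]; have [/eqP] := hS w' hw'; rewrite /husband e.
have sub : T \subset [set x | (0 <= pw w0 x) && (pw w0 x < 0 + (B m + 2 * k - 1))].
  apply/subsetP => x; rewrite !inE /= => /orP[/eqP ->|/imsetP[w' hw' ->]].
    have := kB1 w0 m; rewrite /PW; lia.
  have [_ h] := hS w' hw'; move: h; rewrite /PW /husband; lia.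
have := leq_trans (subset_leq_card sub) (cnt_win _ _ _); rewrite cT => c2.
have := kA2 m w; rewrite -/q; lia.
Qed.

End KR.

From Stdlib Require Import ClassicalEpsilon.

Lemma arith50 k : 0 < k -> (4*k-4+1+2*(3*k-3)) * (4*k-4+1) <= 50*k^2+1.
Proof. case: k => // k _; nia. Qed.

Section Main.
Variable n : nat.
Variables pm pw : 'I_n -> {perm 'I_n}.
Variable k : nat.
Hypothesis hk : k_range pm pw k.
Hypothesis kpos : 0 < k.
Variables m0 w0 : 'I_n.
Local Notation PMn := (PM pm).
Local Notation PWn := (PW pw).
Local Notation stab := (stable pm pw).
Local Notation A w := (PM pm m0 w).
Local Notation B m := (PW pw w0 m).

Definition isrot (R : {set 'I_n * 'I_n}) : bool :=
  if excluded_middle_informative (is_rotation pm pw R) then true else false.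
Lemma isrotP R : reflect (is_rotation pm pw R) (isrot R).
Proof. by rewrite /isrot; case: excluded_middle_informative => h; constructor. Qed.

Definition d := 4 * k - 4.
Definition bag t : {set {set 'I_n * 'I_n}} :=
  [set R | [&& isrot R, [exists p in R, A p.2 <= t + d] & [exists p in R, t <= A p.2]]].

Lemma cross t R : R \in bag t -> exists2 p, p \in R & (t <= A p.2) && (A p.2 <= t + d).
Proof.
rewrite inE => /and3P[/isrotP /rotP[M [ms [sM E ->]]] /existsP[p1 /andP[p1R h1]] /existsP[p2 /andP[p2R h2]]].
case: (boolP [exists p in rotset M ms, (t <= A p.2) && (A p.2 <= t + d)]).
  by case/existsP => p /andP[pR h]; exists p.
move/existsPn => nowin; exfalso.
have U : uniq ms by case/and3P: E.
have nw : forall m, m \in ms -> (t <= A (M m)) && (A (M m) <= t + d) = false.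
  move=> m hm; apply/negbTE; move: (nowin (m, M m)); rewrite imset_f //.
have cl : forall m, m \in ms -> t + d < A (M m) -> t + d < A (M (path.next ms m)).
  move=> m hm hi.
  case/nextP: (exp_next E hm) => a1 _ _.
  have := kA2 hk m0 m (M m); have := kA1 hk m0 m (M (path.next ms m)).
  have hn : path.next ms m \in ms by rewrite mem_next.
  have := nw _ hn; move/negbT; rewrite negb_and -!ltnNge => /orP[c|c] //.
  rewrite /d in hi *; lia.
case/imsetP: p2R => m2 hm2 e2; subst p2.
case/imsetP: p1R => m1 hm1 e1; subst p1.
have hi2 : t + d < A (M m2) by move: (nw m2 hm2); rewrite /= h2 /=; case: leqP.
have := cyc_closed (P := fun m => t + d < A (M m)) U hm2 hi2 cl hm1.
by rewrite ltnNge h1.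
Qed.

Lemma shared R1 R2 p : isrot R1 -> isrot R2 -> p \in R1 -> p \in R2 -> R1 = R2.
Proof.
move=> /isrotP /rotP[M1 [ms1 [s1 E1 ->]]] /isrotP /rotP[M2 [ms2 [s2 E2 ->]]].
move=> /imsetP[m1 h1 ->] /imsetP[m2 h2 [e1 e2]]; subst m2.
by apply/esym; apply: (Dlem s1 E1 s2 E2 h1 h2 e2).
Qed.

Definition Pairs t : {set 'I_n * 'I_n} :=
  [set p | [&& t <= A p.2, A p.2 <= t + d, t <= B p.1 + (3*k-3) & B p.1 <= t + d + (3*k-3)]].

Lemma bag_pair t R : R \in bag t -> exists2 p, p \in R & p \in Pairs t.
Proof.
move=> hR; have [p pR /andP[a b]] := cross hR.
exists p => //; move: hR; rewrite inE => /andP[/isrotP /rotP[M [ms [sM E eR]]] _].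
move: pR; rewrite eR => /imsetP[m _ ep]; subst p; rewrite /= in a b.
have := SP_B hk m0 w0 m sM; have := SP_A hk m0 w0 m sM.
rewrite inE /= => h3 h4; apply/and4P; split; lia.
Qed.

Lemma bag_card t : #|bag t| <= 50 * k ^ 2 + 1.
Proof.
pose f R := odflt (m0, w0) [pick p in R :&: Pairs t].
have fP : forall R, R \in bag t -> f R \in R /\ f R \in Pairs t.
  move=> R hR; rewrite /f; case: pickP => [p|none] /=.
    by rewrite inE => /andP.
  by have [p h1 h2] := bag_pair hR; move: (none p); rewrite inE h1 h2.
have inj : {in bag t &, injective f}.
  move=> R1 R2 h1 h2 e.
  have [a _] := fP R1 h1; have [b _] := fP R2 h2.
  move: h1 h2; rewrite !inE => /andP[r1 _] /andP[r2 _].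
  by apply: (shared r1 r2 a); rewrite e.
have sub : f @: bag t \subset Pairs t.
  by apply/subsetP => _ /imsetP[R hR ->]; have [] := fP R hR.
set lo := t - (3*k-3).
have sub2 : Pairs t \subset setX
    [set m | (lo <= pw w0 m) && (pw w0 m < lo + (d+1+2*(3*k-3)))]
    [set w | (t <= pm m0 w) && (pm m0 w < t + (d+1))].
  apply/subsetP => [[m w]]; rewrite !inE /= /PM /PW /lo; lia.
have := leq_trans (subset_leq_card sub) (subset_leq_card sub2).
rewrite cardsX (card_in_imset inj) => c.
apply: leq_trans c _; apply: leq_trans (leq_mul (cnt_win _ _ _) (cnt_win _ _ _)) _.
exact: arith50.
Qed.

Lemma inW_ex (R : {set 'I_n * 'I_n}) (w : 'I_n) : inW R w -> exists2 p, p \in R & p.2 = w.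
Proof. by case/existsP => p /andP[pR /eqP e]; exists p. Qed.

Lemma loc_bag R1 R2 m x y z : isrot R1 -> isrot R2 -> PMn m x <= PMn m y -> PMn m y <= PMn m z ->
  inW R1 x -> inW R1 z -> inW R2 y ->
  R1 \in bag (A y - (2*k-2)) /\ R2 \in bag (A y - (2*k-2)).
Proof.
move=> r1 r2 h1 h2 /inW_ex[px pxR ex] /inW_ex[pz pzR ez] /inW_ex[py pyR ey].
have := kA2 hk m0 m x; have := kA1 hk m0 m y; have := kA2 hk m0 m y; have := kA1 hk m0 m z.
move=> c1 c2 c3 c4.
split; rewrite inE; apply/and3P; split => //.
- by apply/existsP; exists px; rewrite pxR ex /d /=; lia.
- by apply/existsP; exists pz; rewrite pzR ez /=; lia.
- by apply/existsP; exists py; rewrite pyR ey /d /=; lia.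
- by apply/existsP; exists py; rewrite pyR ey /=; lia.
Qed.

Lemma edge_bag u v : hasse_edge pm pw u v -> exists t, [/\ t < n, u \in bag t & v \in bag t].
Proof.
have lt : forall y : 'I_n, A y - (2*k-2) < n by move=> y; rewrite /PM; have := ltn_ord (pm m0 y); lia.
case=> [c|c]; have [ru [rv _]] := c; move/isrotP: ru => ru; move/isrotP: rv => rv.
- have [m [x [y [z [h1 h2 [[a [b e]]|[a [b e]]]]]]]] := cover_loc c.
    by have [hh1 hh2] := loc_bag ru rv h1 h2 a b e; exists (A y - (2*k-2)); split.
  by have [hh1 hh2] := loc_bag rv ru h1 h2 a b e; exists (A y - (2*k-2)); split.
- have [m [x [y [z [h1 h2 [[a [b e]]|[a [b e]]]]]]]] := cover_loc c.
    by have [hh1 hh2] := loc_bag ru rv h1 h2 a b e; exists (A y - (2*k-2)); split.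
  by have [hh1 hh2] := loc_bag rv ru h1 h2 a b e; exists (A y - (2*k-2)); split.
Qed.

End Main.


Theorem theorem7p9 (n k : nat) (pm pw : 'I_n -> {perm 'I_n}) :
  k_range pm pw k ->
  pathwidth_le (is_rotation pm pw) (hasse_edge pm pw) (50 * k ^ 2).
Proof.
case: n pm pw => [|n'] pm pw hk.
  have norot : forall R, ~ is_rotation pm pw R.
    by move=> R /rotP[M [ms [_ E _]]]; have [[]] := exp_nonempty E.
  exists [::]; split => //; split => //.
  - by move=> v /norot.
  - by move=> u v /norot.
set m0 : 'I_n'.+1 := ord0.
have kpos : 0 < k by case: hk => h _; have := h m0 m0 m0; lia.
pose X := [seq bag pm pw k m0 t | t <- iota 0 n'.+1].
have nthX : forall i, i < n'.+1 -> nth set0 X i = bag pm pw k m0 i.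
  by move=> i hi; rewrite (nth_map 0) ?size_iota // nth_iota.
exists X; split; last first.
  by move=> _ /mapP[t _ ->]; have := bag_card hk kpos m0 m0 t; rewrite addn1.
split.
- move=> _ /mapP[t _ ->] v; rewrite inE => /and3P[/isrotP h _ _]; exact: h.
- move=> v hv; have [M [ms [sM E ev]]] := (rotP _ _ v).1 hv.
  have [m hm] := exp_nonempty E.
  exists (bag pm pw k m0 (PM pm m0 (M m))).
    by apply: map_f; rewrite mem_iota /= /PM ltn_ord.
  rewrite inE; apply/and3P; split; first by apply/isrotP.
    by apply/existsP; exists (m, M m); rewrite ev imset_f //= leq_addr.
  by apply/existsP; exists (m, M m); rewrite ev imset_f //=.
- move=> u v _ _ he; have [t [tn hu hv]] := edge_bag hk kpos m0 he.
  by exists (bag pm pw k m0 t); [apply: map_f; rewrite mem_iota | rewrite hu hv].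
- move=> i j l ij jl; rewrite size_map size_iota => ln.
  rewrite !nthX; try lia.
  apply/subsetP => R; rewrite !inE => /andP[/and3P[r a _] /and3P[_ _ b]].
  rewrite r /=; apply/andP; split.
    case/existsP: a => p /andP[pR h]; apply/existsP; exists p; rewrite pR /=; by apply: leq_trans h _; rewrite leq_add2r.
  case/existsP: b => p /andP[pR h]; apply/existsP; exists p; rewrite pR /=; exact: leq_trans jl h.
Qed.
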